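(* Let $A$ be a division algebra over the field $\mathbb{C}(q)$ ($q$ an indeterminate), let $\alpha:A\to A$ be an algebra isomorphism, and let $A(X)_\alpha$ be the associated skew rational function algebra. If a skew rational fraction $f(X)\in A(X)_\alpha$ satisfies $f(X)=f(q^2X)$, then $f(X)$ is constant, i.e. $f\in A$.
   Context: The skew polynomial algebra $A[X]_\alpha$ consists of formal polynomials $\sum a_iX^i$ with $a_i\in A$, multiplied using the rule $Xa=\alpha(a)X$; it satisfies the Ore condition and $A(X)_\alpha$ denotes its fraction division algebra, whose elements are rational fractions in $X$ with coefficients in $A$ multiplying according to $Xa=\alpha(a)X$. The scalar $q$ is central, and $f(q^2X)$ denotes the result of substituting $q^2X$ for $X$ in $f$. *)

(* Defs.v *)
From HB Require Import structures.
From mathcomp Require Import all_boot all_algebra fraction.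
From mathcomp Require Import reals complex.
Set Implicit Arguments. Unset Strict Implicit. Unset Printing Implicit Defensive.
Import GRing.Theory.
Local Open Scope ring_scope.

(* The field C(q): rational functions in the indeterminate q over
   C = R[i], R a real number field (realType; all are isomorphic to the reals). *)
Notation Cq R := {fraction {poly (R : realType)[i]}}.

Definition qind (R : realType) : Cq R := tofrac 'X.

Definition division_ring (D : unitRingType) : Prop :=
  forall x : D, x != 0 -> x \is a GRing.unit.

Definition skew_eval (A K : unitRingType) (iota : A -> K) (X : K) (s : seq A) : K :=
  \sum_(i < size s) iota s`_i * X ^+ i.

(* (K, iota, X) is the skew rational function algebra A(X)_alpha, i.e. the
   (Ore) division ring of fractions of A[X]_alpha:
   - K is a division ring,
   - X a = alpha(a) X  for a in A (via the embedding iota),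
   - A[X]_alpha embeds in K (the map sum a_i X^i |-> sum iota(a_i) X^i is injective),
   - every element of K is a fraction  P Q^{-1}  of skew polynomials. *)
Definition skew_rational_field (A K : unitRingType) (alpha : A -> A)
    (iota : A -> K) (X : K) : Prop :=
  [/\ division_ring K,
      (forall a : A, X * iota a = iota (alpha a) * X),
      (forall s : seq A, skew_eval iota X s = 0 -> all (fun a => a == 0) s) &
      (forall f : K, exists p r : seq A,
          skew_eval iota X r != 0 /\ f = skew_eval iota X p * (skew_eval iota X r)^-1)].

(* Main.v *)
Require Import Defs.
From HB Require Import structures.
From mathcomp Require Import all_boot all_algebra fraction.
From mathcomp Require Import reals complex.
Import GRing.Theory.
Local Open Scope ring_scope.

Section Aux.
Variables (R : realType) (A : unitAlgType (Cq R)) (alpha : {lrmorphism A -> A})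
  (K : unitRingType) (iota : {rmorphism A -> K}) (X : K).

Definition Q2 : Cq R := qind R ^+ 2.

Lemma Q2_neq i d : i != d -> Q2 ^+ i != Q2 ^+ d.
Proof.
move=> nid; rewrite /Q2 /qind -!exprM -!rmorphXn tofrac_eq.
apply/negP => /eqP Ep; have := congr1 (fun p : {poly _} => size p) Ep; rewrite /= !size_polyXn.
move=> [] /eqP; rewrite eqn_mul2l /=; exact/negP.
Qed.

Lemma alg_unit (k : Cq R) : division_ring A -> k != 0 -> (k%:A : A) \is a GRing.unit.
Proof.
move=> dA k0; apply: dA; rewrite scaler_eq0 negb_or k0 /=; exact: oner_neq0.
Qed.

Definition E n (g : nat -> A) := \sum_(i < n) iota (g i) * X ^+ i.

Lemma E_recr n g : E n.+1 g = E n g + iota (g n) * X ^+ n.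
Proof. by rewrite /E big_ord_recr. Qed.

Lemma E0 g : E 0 g = 0.
Proof. by rewrite /E big_ord0. Qed.

Lemma EB n g h : E n g - E n h = E n (fun i => g i - h i).
Proof.
rewrite /E -sumrB; apply: eq_bigr => i _; by rewrite rmorphB mulrBl.
Qed.

Lemma E_ext n g h : (forall i, (i < n)%N -> g i = h i) -> E n g = E n h.
Proof. move=> H; rewrite /E; apply: eq_bigr => i _; by rewrite H. Qed.

Lemma skew_eval_E s : skew_eval iota X s = E (size s) (nth 0 s).
Proof. by []. Qed.

Lemma E_mkseq n g : E n g = skew_eval iota X (mkseq g n).
Proof.
rewrite skew_eval_E size_mkseq; apply: E_ext => i lin; by rewrite nth_mkseq.
Qed.

Hypothesis Xc : forall a : A, X * iota a = iota (alpha a) * X.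

Definition u (k : Cq R) : K := iota (k%:A).

Lemma commXu k : GRing.comm X (u k).
Proof. by rewrite /GRing.comm /u Xc rmorph_alg. Qed.

Lemma uX k i : u k ^+ i = u (k ^+ i).
Proof. by rewrite /u -rmorphXn exprZn expr1n. Qed.

Lemma Eu n g k : E n g * u k = E n (fun i => g i * k%:A).
Proof.
rewrite /E mulr_suml; apply: eq_bigr => i _.
have := commrX i (commr_sym (commXu k)); rewrite /GRing.comm -mulrA => <-.
by rewrite mulrA /u rmorphM.
Qed.

Variable sigma : {rmorphism K -> K}.
Hypothesis sig_iota : forall a : A, sigma (iota a) = iota a.
Hypothesis sigX : sigma X = u Q2 * X.

Lemma sigE n g : sigma (E n g) = E n (fun i => g i * (Q2 ^+ i)%:A).
Proof.
rewrite /E rmorph_sum; apply: eq_bigr => i _.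
rewrite rmorphM rmorphXn sig_iota sigX exprMn_comm; last by apply/esym/commXu.
by rewrite uX mulrA /u rmorphM.
Qed.


Lemma E_inj n g : (forall s : seq A, skew_eval iota X s = 0 -> all (fun a => a == 0) s) ->
  E n g = 0 -> forall i, (i < n)%N -> g i = 0.
Proof.
move=> inj; rewrite E_mkseq => /inj /allP H i lin; apply/eqP/H.
by rewrite /mkseq; apply: map_f; rewrite mem_iota.
Qed.

Lemma E_single n g d : (forall i, (i < n)%N -> i != d -> g i = 0) ->
  E n g = iota (if (d < n)%N then g d else 0) * X ^+ d.
Proof.
elim: n => [|n IH] H; first by rewrite E0 rmorph0 mul0r.
rewrite E_recr IH; last by move=> i lin; apply: H; exact: ltnW.
case: (eqVneq n d) => [->|nd]; first by rewrite ltnn ltnSn rmorph0 mul0r add0r.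
by rewrite (H n) // rmorph0 mul0r addr0 ltnS (leq_eqVlt d n) eq_sym (negbTE nd).
Qed.


Hypothesis dA : division_ring A.
Hypothesis dK : division_ring K.
Hypothesis inj : forall s : seq A, skew_eval iota X s = 0 -> all (fun a => a == 0) s.
Hypothesis frac : forall f : K, exists p r : seq A,
  skew_eval iota X r != 0 /\ f = skew_eval iota X p * (skew_eval iota X r)^-1.

Lemma cancel_unit (a : A) i d : i != d -> a * (Q2 ^+ i - Q2 ^+ d)%:A = 0 -> a = 0.
Proof.
move=> ne H; have U : ((Q2 ^+ i - Q2 ^+ d)%:A : A) \is a GRing.unit.
  by apply: alg_unit => //; rewrite subr_eq0 Q2_neq.
by rewrite -(mulrK U a) H mul0r.
Qed.

Lemma main f : sigma f = f -> exists a, f = iota a.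
Proof.
move=> sf.
have Xu : X \is a GRing.unit.
  apply: dK; apply/eqP => X0.
  pose g i : A := if i == 1%N then 1 else 0.
  have : E 2 g = 0.
    by rewrite /E !big_ord_recr big_ord0 /= /g /= rmorph0 rmorph1 mul0r !add0r mul1r expr1.
  move/(E_inj _ _ inj)=> /(_ 1%N isT); rewrite /g /=; apply/eqP; exact: oner_neq0.
have key : forall n g, E n g != 0 -> (exists m h, f * E n g = E m h) -> exists a, f = iota a.
  elim/ltn_ind => n IH g Eg0 [m [h fE]].
  case: n IH Eg0 fE => [|d] IH Eg0 fE; first by rewrite E0 eqxx in Eg0.
  pose g' i := g i * (Q2 ^+ i - Q2 ^+ d)%:A.
  pose h' i := h i * (Q2 ^+ i - Q2 ^+ d)%:A.
  have eg : E d.+1 g' = sigma (E d.+1 g) - E d.+1 g * u (Q2 ^+ d).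
    by rewrite sigE Eu EB; apply: E_ext => i _; rewrite /g' scalerBl mulrBr.
  have eh : E m h' = sigma (E m h) - E m h * u (Q2 ^+ d).
    by rewrite sigE Eu EB; apply: E_ext => i _; rewrite /h' scalerBl mulrBr.
  have eg2 : E d.+1 g' = E d g'.
    by rewrite E_recr /g' subrr scale0r mulr0 rmorph0 mul0r addr0.
  have fg : f * E d g' = E m h'.
    by rewrite -eg2 eg mulrBr mulrA -{1}sf -rmorphM fE eh.
  case: (eqVneq (E d g') 0) => [g'0|g'n0]; last first.
    by apply: (IH d (ltnSn d) g' g'n0); exists m, h'.
  have gi : forall i, (i < d.+1)%N -> i != d -> g i = 0.
    move=> i lt ne; have lid : (i < d)%N by rewrite ltn_neqAle ne -ltnS.
    apply: (cancel_unit _ i d ne); exact: (E_inj _ _ inj g'0 i lid).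
  have Eg := E_single _ _ _ gi; rewrite ltnSn in Eg.
  have gd0 : g d != 0.
    by apply: contraNneq Eg0; rewrite Eg => ->; rewrite rmorph0 mul0r.
  have h'0 : E m h' = 0 by rewrite -fg g'0 mulr0.
  have hi : forall i, (i < m)%N -> i != d -> h i = 0.
    move=> i lt ne; apply: (cancel_unit _ i d ne); exact: (E_inj _ _ inj h'0 i lt).
  have Eh := E_single _ _ _ hi.
  move: fE; rewrite Eg Eh mulrA => /(mulIr (unitrX d Xu)) fE.
  exists ((if (d < m)%N then h d else 0) / g d).
  have gU : iota (g d) \is a GRing.unit by apply: rmorph_unit; exact: dA.
  by rewrite rmorphM rmorphV ?dA // -fE mulrK.
have [p [r [r0 fpr]]] := frac f.
apply: (key (size r) (nth 0 r)) => //; exists (size p), (nth 0 p).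
by rewrite fpr mulrVK // dK.
Qed.

End Aux.

Theorem lemma5 (R : realType) (A : unitAlgType (Cq R))
    (alpha : {lrmorphism A -> A})
    (K : unitRingType) (iota : {rmorphism A -> K}) (X : K)
    (sigma : {rmorphism K -> K}) :
  division_ring A ->
  bijective alpha ->
  skew_rational_field alpha iota X ->
  (* sigma is the substitution f(X) |-> f(q^2 X) *)
  (forall a : A, sigma (iota a) = iota a) ->
  sigma X = iota ((qind R ^+ 2)%:A) * X ->
  forall f : K, sigma f = f -> exists a : A, f = iota a.
Proof.
move=> dA _ [dK Xc inj frac] sig_iota sigX f sf.
exact: (main _ _ alpha _ iota X Xc sigma sig_iota sigX dA dK inj frac f sf).
Qed.
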